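(* There exists a random coverage collaborative learning problem with strategy space $\Theta=\mathbb{R}_+^k$ whose set of stable equilibria is non-convex.
   Context: Random coverage: finite domain $\mathcal{X}$; agent $i$ has a distribution $(q_{ix})_{x\in\mathcal{X}}$ on $\mathcal{X}$. For integer sample counts ${\bf m}$, $U_i({\bf m})=1-\frac12\sum_{x\in\mathcal{X}}q_{ix}\prod_{j=1}^k(1-q_{jx})^{m_j}$; for real ${\boldsymbol\theta}\in\mathbb{R}_+^k$, $u_i({\boldsymbol\theta})=\mathbb{E}[U_i({\bf m})]$ where the $m_j$ are independent with $m_j=\lfloor\theta_j\rfloor+\mathrm{Bernoulli}(\theta_j-\lfloor\theta_j\rfloor)$. Each agent has a threshold $\mu_i$; ${\boldsymbol\theta}$ is feasible if $u_i({\boldsymbol\theta})\ge\mu_i$ for all $i$. A feasible ${\boldsymbol\theta}$ is a stable equilibrium if for no $i$ is there $0\le\theta_i'<\theta_i$ with $u_i(\theta_i',{\boldsymbol\theta}_{-i})\ge\mu_i$ (${\boldsymbol\theta}$ with $i$-th entry replaced by $\theta_i'$). *)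

(* Defs.v *)
From mathcomp Require Import all_boot all_order all_algebra.
From mathcomp Require Import Rstruct.
From Stdlib Require Import Reals.
Set Implicit Arguments. Unset Strict Implicit. Unset Printing Implicit Defensive.
Import Order.TTheory GRing.Theory Num.Theory.
Local Open Scope ring_scope.

Notation RR := Rdefinitions.R.

Section RandomCoverage.
Variables (X : finType) (k : nat) (q : 'I_k -> X -> RR).

Definition is_distr : Prop :=
  forall i : 'I_k, (forall x, 0 <= q i x) /\ \sum_(x : X) q i x = 1.

Definition Ucov (i : 'I_k) (m : 'I_k -> nat) : RR :=
  1 - 2^-1 * \sum_(x : X) q i x * \prod_(j < k) (1 - q j x) ^+ m j.

(* floor and fractional part (theta_j >= 0, so truncn = floor) *)
Definition fl (t : RR) : nat := Num.truncn t.
Definition frac (t : RR) : RR := t - (fl t)%:R.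

(* u_i(theta) = E[U_i(m)] with independent m_j = floor theta_j + Bernoulli(frac theta_j);
   the expectation is written out as the finite sum over outcomes b of the Bernoullis. *)
Definition ucov (i : 'I_k) (theta : 'I_k -> RR) : RR :=
  \sum_(b : {ffun 'I_k -> bool})
     (\prod_(j < k) (if b j then frac (theta j) else 1 - frac (theta j)))
     * Ucov i (fun j => (fl (theta j) + b j)%N).

Definition upd (theta : 'I_k -> RR) (i : 'I_k) (t : RR) : 'I_k -> RR :=
  fun j => if j == i then t else theta j.

Definition in_strategy_space (theta : 'I_k -> RR) : Prop :=
  forall j, 0 <= theta j.

Definition feasible (mu : 'I_k -> RR) (theta : 'I_k -> RR) : Prop :=
  forall i, mu i <= ucov i theta.

Definition stable_equilibrium (mu : 'I_k -> RR) (theta : 'I_k -> RR) : Prop :=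
  in_strategy_space theta /\ feasible mu theta /\
  forall i (t : RR), 0 <= t -> t < theta i -> ~ (mu i <= ucov i (upd theta i t)).

End RandomCoverage.

Definition convex_set (k : nat) (S : ('I_k -> RR) -> Prop) : Prop :=
  forall a b (l : RR), S a -> S b -> 0 <= l -> l <= 1 ->
    S (fun j => l * a j + (1 - l) * b j).

(* Main.v *)
Require Import Defs.
From mathcomp Require Import all_boot all_order all_algebra.
From mathcomp Require Import Rstruct.
From mathcomp Require Import ring lra.
Import Order.TTheory GRing.Theory Num.Theory.
Local Open Scope ring_scope.

Definition q0 : 'I_2 -> unit -> RR := fun _ _ => 1.

Definition hh (t : RR) : RR := if fl t == 0%N then 1 - Defs.frac t else 0.

Lemma Ucov_q0 i m : Ucov q0 i m = 1 - 2^-1 * \prod_(j < 2) (0 : RR) ^+ m j.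
Proof.
rewrite /Ucov /q0 big_const card_unit /= addr0 mul1r subrr //.
Qed.

Lemma ucov_q0 i th : ucov q0 i th = 1 - 2^-1 * \prod_(j < 2) hh (th j).
Proof.
rewrite /ucov.
under eq_bigr => b _ do rewrite Ucov_q0 mulrBr mulr1 mulrCA -big_split /=.
rewrite sumrB -mulr_sumr.
rewrite -(bigA_distr_bigA (fun j (c : bool) => if c then Defs.frac (th j) else 1 - Defs.frac (th j))).
rewrite -(bigA_distr_bigA (fun j (c : bool) => (if c then Defs.frac (th j) else 1 - Defs.frac (th j)) * 0 ^+ (fl (th j) + c)%N)).
rewrite !big_ord_recr !big_ord0 /= !big_bool /= /hh.
have E : forall t : RR, Defs.frac t * 0 ^+ (fl t + 1)%N + (1 - Defs.frac t) * 0 ^+ (fl t + 0)%N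
   = (if fl t == 0%N then 1 - Defs.frac t else 0).
  move=> t; rewrite addn1 expr0n /= mulr0 add0r addn0 expr0n.
  by case: (fl t == 0%N); rewrite ?mulr1 ?mulr0.
rewrite !E; congr (_ - _); by rewrite !mul1r !(addrC (Defs.frac _)) !subrK mulr1.
Qed.

Lemma fl_small t : t < 1 -> fl t = 0%N.
Proof.
move=> h; apply/eqP; rewrite -leqn0 leqNgt /fl truncn_gt0 -ltNge //.
Qed.

Lemma hh_small t : t < 1 -> hh t = 1 - t.
Proof. by move=> h; rewrite /hh /Defs.frac fl_small // eqxx RminusE subr0. Qed.

Lemma hh1 : hh 1 = 0.
Proof. by rewrite /hh /fl truncn1. Qed.

Lemma ucov2 i th : ucov q0 i th = 1 - 2^-1 * (hh (th ord0) * hh (th ord_max)).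
Proof.
rewrite ucov_q0 big_ord_recl big_ord1.
by have -> : lift ord0 ord0 = ord_max :> 'I_2 by apply/val_inj.
Qed.

Definition pa : 'I_2 -> RR := fun j => if j == ord0 then 1 else 0.
Definition pb : 'I_2 -> RR := fun j => if j == ord0 then 0 else 1.

Lemma stab_a : stable_equilibrium q0 (fun _ => 1) pa.
Proof.
split; first by move=> j; rewrite /pa; case: ifP => _; lra.
split.
  move=> i; rewrite ucov2 /pa /= hh1 mul0r mulr0 subr0 //.
move=> [[|[|n]] Hi] t t0 tl //=.
  rewrite ucov2 /upd /pa /= in tl *.
  rewrite hh_small // hh_small; last lra.
  lra.
rewrite /pa /= in tl; lra.
Qed.

Lemma stab_b : stable_equilibrium q0 (fun _ => 1) pb.
Proof.
split; first by move=> j; rewrite /pb; case: ifP => _; lra.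
split.
  move=> i; rewrite ucov2 /pb /= hh1 mulr0 mulr0 subr0 //.
move=> [[|[|n]] Hi] t t0 tl //=.
  rewrite /pb /= in tl; lra.
rewrite ucov2 /upd /pb /= in tl *.
rewrite hh_small // hh_small; last lra.
lra.
Qed.

Theorem theorem8 :
  exists (X : finType) (k : nat) (q : 'I_k -> X -> RR) (mu : 'I_k -> RR),
    is_distr q /\ (forall i, 0 <= mu i <= 1) /\
    ~ convex_set (stable_equilibrium q mu).
Proof.
exists unit, 2%N, q0, (fun _ => 1).
split.
  move=> i; split => [x|]; first by rewrite /q0.
  by rewrite big_const card_unit /= addr0.
split; first by move=> i; rewrite lexx ler01.
move=> C.
have : 0 <= 2^-1 :> RR by lra.
have : 2^-1 <= 1 :> RR by lra.
move=> h1 h0.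
have [_ [F _]] := C pa pb (2^-1) stab_a stab_b h0 h1.
have := F ord0; rewrite ucov2 /pa /pb /=.
rewrite !mulr1 !mulr0 addr0 add0r hh_small; last lra.
rewrite hh_small; last lra.
have -> : (2^-1 : RR) * ((1 - 2^-1) * (1 - (1 - 2^-1))) = 8^-1 by field.
have : (0 : RR) < 8^-1 by rewrite invr_gt0 ltr0n.
lra.
Qed.
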